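(* Let $F(x) = A\cos(px) + B\cos(qx)$ be a non-zero function, where $A, B \in \mathbb{R}$, $p$ and $q$ are coprime positive integers and $p + q$ is odd. Then \[ \min(\rho_+(F), \rho_-(F)) \geq \frac{1}{2} - \frac{1}{2(p+q)}. \]
   Context: For a continuous periodic function $F\colon \mathbb{R} \to \mathbb{R}$ with period $P > 0$, $\rho_+(F) = \lambda(\{x \in [0,P] : F(x) > 0\})/P$ and $\rho_-(F) = \lambda(\{x \in [0,P] : F(x) < 0\})/P$, where $\lambda$ is Lebesgue measure (independent of the choice of period). *)

(* Defs.v *)
From HB Require Import structures.
From mathcomp Require Import all_boot all_order all_algebra.
From mathcomp Require Import all_classical all_reals all_analysis.
Set Implicit Arguments. Unset Strict Implicit. Unset Printing Implicit Defensive.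
Import Order.TTheory GRing.Theory Num.Theory.
Local Open Scope classical_set_scope.
Local Open Scope ring_scope.

Definition rho_plus (R : realType) (F : R -> R) (P : R) : \bar R :=
  (lebesgue_measure ([set x : R | (0 <= x <= P)%R] `&` [set x | (0 < F x)%R]) * (P^-1)%:E)%E.

Definition rho_minus (R : realType) (F : R -> R) (P : R) : \bar R :=
  (lebesgue_measure ([set x : R | (0 <= x <= P)%R] `&` [set x | (F x < 0)%R]) * (P^-1)%:E)%E.

(* Main.v *)
Require Import Defs.
From HB Require Import structures.
From mathcomp Require Import all_boot all_order all_algebra.
From mathcomp Require Import all_classical all_reals all_analysis.
From mathcomp Require Import zify ring lra.
Import Order.TTheory GRing.Theory Num.Theory.
Import numFieldNormedType.Exports.
Local Open Scope classical_set_scope.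
Local Open Scope ring_scope.
Section S.
Variable R : realType.

Lemma cos_periodz (x : R) (z : int) : cos (x + 2 * pi * z%:~R) = cos x.
Proof.
have P := periodicn (@cosD2pi R).
have E m : 2 * pi * m%:R = pi *+ 2 *+ m :> R by rewrite mulr_natr mulr_natl.
case: z => n.
  by rewrite -pmulrn E P.
rewrite NegzE mulrNz -pmulrn.
by rewrite -(P n.+1) -E mulrN -addrA addNr addr0.
Qed.

Lemma natr_absz_ge0 (m : int) : 0 <= m -> (`|m|%N)%:R = m%:~R :> R.
Proof. by move=> m0; rewrite natr_absz ger0_norm. Qed.


Lemma count_cos (N k : nat) (phi : R) : N = k.*2.+1 ->
  (k <= #|[set r : 'I_N | (0 < cos (2 * pi * (r%:R / N%:R) + phi))%R]%SET|)%N.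
Proof.
move=> hN; subst N.
set N := k.*2.+1.
have NR0 : 0 < N%:R :> R by rewrite ltr0n.
have NRk : N%:R = 2 * k%:R + 1 :> R by rewrite /N -addn1 natrD -muln2 natrM mulrC.
have pi0 := @pi_gt0 R.
set s : R := - phi * N%:R / (2 * pi) - N%:R / 4.
set z := Num.floor s.
pose u (i : nat) : int := z + 1 + i%:Z.
pose r (i : nat) : nat := `|(u i %% N%:Z)%Z|%N.
have hr i : (r i < N)%N.
  by rewrite /r -ltz_nat gez0_abs ?modz_ge0 ?ltz_pmod.
pose g (i : 'I_k) : 'I_N := Ordinal (hr i).
have zs : s < (z + 1)%:~R /\ z%:~R <= s.
  by have /andP[] := floor_itv s.
have key (i : 'I_k) : 0 < cos (2 * pi * ((r i)%:R / N%:R) + phi).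
  have hu := divz_eq (u i) N%:Z.
  have rE : (r i)%:R = (u i)%:~R - ((u i %/ N%:Z)%Z)%:~R * N%:R :> R.
    rewrite natr_absz_ge0 ?modz_ge0 //.
    have -> : (u i %% N%:Z)%Z = u i - (u i %/ N%:Z)%Z * N%:Z.
      by [].
    by rewrite intrB intrM.
  set a := (u i)%:~R - s.
  have E : 2 * pi * ((r i)%:R / N%:R) + phi =
      (2 * pi * (a / N%:R) - pi / 2) + 2 * pi * (- (u i %/ N%:Z)%Z)%:~R.
    rewrite rE /a /s intrN; move: (@pi R) pi0 => P P0; field.
    by rewrite !gt_eqF.
  rewrite E cos_periodz.
  have a0 : 0 < a.
    by rewrite /a subr_gt0 (lt_le_trans zs.1) // /u ler_int lerDl.
  have aN : a < N%:R / 2.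
    rewrite /a /u !intrD /= NRk.
    have ik : (i%:Z)%:~R + 1 <= k%:R :> R.
      by rewrite -pmulrn natr1 ler_nat ltn_ord.
    have := zs.2. lra.
  have b0 : 0 < a / N%:R by rewrite divr_gt0.
  have b1 : a / N%:R < 1 / 2.
    rewrite ltr_pdivrMr //; lra.
  apply: cos_gt0_pihalf; apply/andP; split; nra.
have ginj : injective g.
  move=> i j /(congr1 val) /= /(congr1 Posz).
  rewrite !gez0_abs ?modz_ge0 // => hm.
  apply/val_inj => /=.
  have hi := divz_eq (u i) N%:Z.
  have hj := divz_eq (u j) N%:Z.
  rewrite hm in hi.
  move: hi hj; rewrite /u.
  move: (_ %/ _)%Z (_ %/ _)%Z (_ %% _)%Z => qi qj m hi hj.
  have := ltn_ord i; have := ltn_ord j.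
  move: (nat_of_ord i) (nat_of_ord j) hi hj => a b hi hj hb ha.
  have NE : N = k.*2.+1 by [].
  have e : (a%:Z - b%:Z) = (qj - qi) * N%:Z.
    nia.
  move: e; move: (qj - qi) => d e.
  case: (ltgtP d 0) => hd.
  - have : d <= -1 by lia.
    nia.
  - have : 1 <= d by lia.
    nia.
  - move: e; rewrite hd mul0r; lia.
rewrite -[X in (X <= _)%N]card_ord -cardsT -(card_imset [set: 'I_k]%SET ginj).
apply: subset_leq_card; apply/fintype.subsetP => _ /imsetP[i _ ->].
by rewrite finset.inE; exact: key.
Qed.

Lemma polar (a b : R) : (a != 0) || (b != 0) ->
  exists r phi, 0 < r /\ a = r * cos phi /\ b = r * sin phi.
Proof.
move=> hab.
have s0 : 0 < a ^+ 2 + b ^+ 2.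
  case/orP: hab => h.
    by apply: ltr_wpDr; rewrite ?sqr_ge0 // lt0r sqrf_eq0 h sqr_ge0.
  by apply: ltr_wpDl; rewrite ?sqr_ge0 // lt0r sqrf_eq0 h sqr_ge0.
set r := Num.sqrt (a ^+ 2 + b ^+ 2).
have r0 : 0 < r by rewrite sqrtr_gt0.
have r2 : r ^+ 2 = a ^+ 2 + b ^+ 2 by rewrite sqr_sqrtr // ltW.
set c := a / r.
have c2 : 1 - c ^+ 2 = (b / r) ^+ 2.
  rewrite /c !expr_div_n; apply: (@mulIf _ (r ^+ 2)); first by rewrite expf_neq0 // gt_eqF.
  rewrite mulrBl mul1r !divfK ?expf_neq0 ?gt_eqF // r2; ring.
have c1 : -1 <= c <= 1.
  have : 0 <= (b / r) ^+ 2 by rewrite sqr_ge0.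
  rewrite -c2 => h; apply/andP; split; nra.
have cc : cos (acos c) = c by apply: acosK; rewrite in_itv.
have sc : sin (acos c) = `|b| / r.
  by rewrite sin_acos // c2 sqrtr_sqr normf_div (gtr0_norm r0).
exists r; case: (leP 0 b) => hb.
  exists (acos c); split => //; split.
    by rewrite cc /c mulrC divfK // gt_eqF.
  by rewrite sc (ger0_norm hb) mulrC divfK // gt_eqF.
exists (- acos c); split => //; split.
  by rewrite cosN cc /c mulrC divfK // gt_eqF.
by rewrite sinN sc (ltr0_norm hb) mulrN mulrC divfK ?opprK // gt_eqF.
Qed.


Definition Fpq (A B : R) (p q : nat) (x : R) :=
  A * cos (p%:R * x) + B * cos (q%:R * x).

Lemma count_F (A B : R) (p q k : nat) (x : R) :
  (p + q)%N = k.*2.+1 -> coprime p q ->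
  (A * cos (p%:R * x) + B * cos (q%:R * x) != 0) ||
  (A * sin (p%:R * x) - B * sin (q%:R * x) != 0) ->
  (k <= #|[set m : 'I_(p + q) |
     (0 < Fpq A B p q (x + m%:R * (2 * pi / (p + q)%:R)))%R]%SET|)%N.
Proof.
move=> hN cpq /polar [r [phi [r0 [h1 h2]]]].
set N := (p + q)%N.
have N0 : (0 < N)%N by rewrite /N hN.
have NR0 : 0 < N%:R :> R by rewrite ltr0n.
have NRE : N%:R = p%:R + q%:R :> R by rewrite natrD.
have pi0 := @pi_gt0 R.
have hF (m : nat) : Fpq A B p q (x + m%:R * (2 * pi / N%:R)) =
    r * cos (2 * pi * ((p * m %% N)%N%:R / N%:R) + phi).
  set th : R := 2 * pi * ((p * m)%N%:R / N%:R).
  have e1 : p%:R * (x + m%:R * (2 * pi / N%:R)) = p%:R * x + th.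
    rewrite /th natrM; move: (@pi R) pi0 => P P0; field.
    by rewrite gt_eqF.
  have e2 : q%:R * (x + m%:R * (2 * pi / N%:R)) =
      (q%:R * x + - th) + 2 * pi * (m%:Z)%:~R.
    rewrite /th natrM -pmulrn; move: (@pi R) pi0 => P P0.
    have -> : q%:R = N%:R - p%:R :> R by rewrite NRE addrC addKr.
    by field; rewrite gt_eqF.
  have e3 : th + phi = 2 * pi * ((p * m %% N)%N%:R / N%:R) + phi +
      2 * pi * (((p * m) %/ N)%N%:Z)%:~R.
    rewrite /th -pmulrn {1}(divn_eq (p * m) N) natrD natrM.
    by move: (@pi R) pi0 => P P0; field; rewrite gt_eqF.
  have -> : cos (2 * pi * ((p * m %% N)%N%:R / N%:R) + phi) = cos (th + phi).
    by rewrite e3 cos_periodz.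
  rewrite /Fpq e1 e2 cos_periodz !cosD cosN sinN.
  have -> : A * (cos (p%:R * x) * cos th - sin (p%:R * x) * sin th) +
    B * (cos (q%:R * x) * cos th - sin (q%:R * x) * - sin th) =
    (A * cos (p%:R * x) + B * cos (q%:R * x)) * cos th -
    (A * sin (p%:R * x) - B * sin (q%:R * x)) * sin th by ring.
  rewrite h1 h2; ring.
pose sig (m : 'I_N) : 'I_N := Ordinal (ltn_pmod (p * m) N0).
have siginj : injective sig.
  have cpN : coprime N p by rewrite coprime_sym /coprime /N gcdnDl.
  suff H (a b : 'I_N) : (a <= b)%N -> sig a = sig b -> a = b.
    by move=> a b; case: (leqP a b) => [/H//|/ltnW ab /esym /(H _ _ ab) ->].
  move=> ab /(congr1 val) /= /eqP.
  rewrite eq_sym eqn_mod_dvd ?leq_mul2l ?ab ?orbT // -mulnBr Gauss_dvdr //.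
  move=> /dvdn_leq; case: (ltnP a b) => [ab' /(_ _) H|ba _].
  - have := H; rewrite subn_gt0 => /(_ ab') hle.
    have : (b - a < N)%N by apply: leq_ltn_trans (leq_subr _ _) (ltn_ord b).
    by rewrite ltnNge hle.
  - by apply/val_inj/eqP; rewrite eqn_leq ab ba.
apply: leq_trans (count_cos _ _ phi hN) _.
rewrite -[X in (X <= _)%N](card_preimset _ siginj); apply: subset_leq_card.
apply/fintype.subsetP => m; rewrite !finset.inE => hm.
by rewrite hF pmulr_rgt0.
Qed.

End S.
Arguments Fpq {R}.
Arguments count_F {R}.
Arguments cos_periodz {R}.
Section M.
Variable R : realType.
Local Notation mu := (@lebesgue_measure R).

Definition shiftR (c : R) : R -> R := fun y => y + c.

Lemma measurable_shiftR (c : R) : measurable_fun setT (shiftR c).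
Proof.
rewrite /shiftR; apply: measurable_realfun.measurable_funD => //; exact: measurable_cst.
Qed.

HB.instance Definition _ (c : R) :=
  isMeasurableFun.Build _ _ _ _ (shiftR c) (measurable_shiftR c).

Lemma lebesgue_shift (c : R) (A : set R) : measurable A ->
  mu (shiftR c @^-1` A) = mu A.
Proof.
move=> mA.
have -> : mu (shiftR c @^-1` A) = pushforward mu (shiftR c) A by [].
apply/esym; apply: (@lebesgue_measure_unique R (@pushforward _ _ _ _ R mu (shiftR c : _ -> measurableTypeR R))).
- exact: measurable_shiftR.
- move=> mf _ [[a b]] _ <-.
  change (mu `]a, b]%classic = mu (shiftR c @^-1` `]a, b]%classic)).
  have -> : shiftR c @^-1` `]a, b]%classic = `]a - c, b - c]%classic.
    apply/seteqP; split => y; rewrite /shiftR /= !in_itv /=;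
      by move=> /andP[h1 h2]; apply/andP; split; lra.
  rewrite !lebesgue_measure_itv /= !lte_fin.
  rewrite ltrBlDr subrK; case: ifP => // _; congr (_%:E); lra.
- exact: mA.
Qed.
End M.
Arguments shiftR {R}.
Arguments measurable_shiftR {R}.
Arguments lebesgue_shift {R}.
Lemma Fshift_cont (R : realType) (A B : R) (p q : nat) (c : R) :
  continuous (fun y : R => A * cos (p%:R * (y + c)) + B * cos (q%:R * (y + c))).
Proof.
have hc (a : R) (n : nat) : continuous (fun y : R => a * cos (n%:R * (y + c))).
  move=> y.
  have h1 : {for y, continuous (fun y : R => n%:R * (y + c))}.
    apply: (continuousM (K := R) (T := R) (s := fun=> n%:R) (t := fun y : R => y + c)); first exact: cvg_cst.
    apply: (continuousD (K := R) (V := R) (T := R) (f := fun y : R => y) (g := fun=> c)); [exact: cvg_id | exact: cvg_cst].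
  have h2 := continuous_comp h1 (@continuous_cos R _).
  exact: (continuousM (K := R) (T := R) (s := fun=> a) (t := fun y : R => cos (n%:R * (y + c))) (cvg_cst _) h2).
move=> y.
exact: (continuousD (K := R) (V := R) (T := R) (f := fun y : R => A * cos (p%:R * (y + c))) (g := fun y : R => B * cos (q%:R * (y + c))) (hc A p y) (hc B q y)).
Qed.

Section Main.
Variable R : realType.
Local Notation mu := (@lebesgue_measure R).

Lemma measurable_pos (f : R -> R) : continuous f -> measurable [set y | 0 < f y].
Proof.
move=> cf.
have := measurable_realfun.continuous_measurable_fun cf measurableT
  (measurable_itv `]0, +oo[).
rewrite setTI; congr measurable; apply/seteqP; split => y /=;
  by rewrite in_itv /= andbT.
Qed.

Lemma main_plus (A B : R) (p q : nat) : (0 < p)%N -> (0 < q)%N ->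
  coprime p q -> odd (p + q) -> (exists y, Fpq A B p q y != 0) ->
  ((1 / 2 - 1 / (2 * (p + q)%:R))%:E <= rho_plus (Fpq A B p q) (2 * pi))%E.
Proof.
move=> p0 q0 cpq oN [y0 hy0].
set N := (p + q)%N.
set k := N./2.
have hN : N = k.*2.+1 by rewrite -{1}(odd_double_half N) oN.
have AB : (A != 0) || (B != 0).
  case: (eqVneq A 0) => [A0|//]; case: (eqVneq B 0) => [B0|]; last by rewrite orbT.
  by move: hy0; rewrite /Fpq A0 B0 !mul0r addr0 eqxx.
have NR0 : 0 < N%:R :> R by rewrite ltr0n hN.
have pi0 := @pi_gt0 R.
set h : R := 2 * pi / N%:R.
have h0 : 0 < h by rewrite /h divr_gt0 // mulr_gt0.
set F := Fpq A B p q.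
have Fc (c : R) : continuous (fun y => F (y + c)) by exact: Fshift_cont.
have Fc0 : continuous F.
  have -> : F = (fun y => F (y + 0)) by apply/funext => y; rewrite addr0.
  exact: Fc.
set P := [set y | 0 < F y].
have mP : measurable P by exact: measurable_pos.
pose S (m : nat) := `[m%:R * h, m%:R * h + h[%classic `&` P.
pose G (m : nat) := `[0, h[%classic `&` [set y | 0 < F (y + m%:R * h)].
have mS m : measurable (S m) by apply: measurableI => //; exact: measurable_itv.
have mG m : measurable (G m).
  apply: measurableI; first exact: measurable_itv.
  exact: measurable_pos.
have GE m : G m = shiftR (m%:R * h) @^-1` S m.
  apply/seteqP; split => y; rewrite /G /S /shiftR /= !in_itv /=.
    by move=> [/andP[h1 h2] h3]; split => //; apply/andP; split; lra.
  by move=> [/andP[h1 h2] h3]; split => //; apply/andP; split; lra.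
set D := `]0, h[%classic `\ (pi / N%:R).
have mD : measurable D.
  by apply: measurableD; [exact: measurable_itv | exact: measurable_set1].
have step_a : (\sum_(m < N) mu (S m) <=
    mu ([set x : R | (0 <= x <= 2 * pi)%R] `&` [set x | (0 < F x)%R]))%E.
  have Nh : N%:R * h = 2 * pi by rewrite /h mulrC divfK // gt_eqF.
  have lt_mh (i j : nat) : (i < j)%N -> i%:R * h + h <= j%:R * h.
    move=> ij; have : (i.+1)%:R * h <= j%:R * h by rewrite ler_pM2r // ler_nat.
    by rewrite -natr1 mulrDl mul1r.
  rewrite -(measure_semi_additive_ord mu (F := fun m : 'I_N => S m)).
  - apply: le_measure; rewrite ?inE.
    + by apply: bigsetU_measurable => m _; exact: mS.
    + apply: measurableI => //.
      have -> : [set x : R | (0 <= x <= 2 * pi)%R] = `[0%R, (2 * pi)%R]%classic.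
        by apply/seteqP; split => y; rewrite /= in_itv.
      exact: measurable_itv.
    + move=> y; rewrite -bigcup_mkord => -[m /= mN [hy Py]]; split=> //.
      move: hy; rewrite /= in_itv /= => /andP[h1 h2].
      have := lt_mh _ _ mN; rewrite Nh => h3.
      have h4 : 0 <= m%:R * h by rewrite mulr_ge0 // ltW.
      by apply/andP; split; lra.
  - by move=> m; exact: mS.
  - apply/trivIsetP => i j _ _ ij; apply/seteqP; split => // y [[hi _] [hj _]].
    move: hi hj; rewrite /= !in_itv /= => /andP[hi1 hi2] /andP[hj1 hj2].
    case: (ltngtP i j) => [lij|lji|eij].
    + by have := lt_mh _ _ lij; lra.
    + by have := lt_mh _ _ lji; lra.
    + by move: ij; rewrite (val_inj eij) eqxx.
  - by apply: bigsetU_measurable => m _; exact: mS.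
have step_b : (\sum_(m < N) mu (G m `&` D) <= \sum_(m < N) mu (S m))%E.
  apply: lee_sum => m _.
  have -> : mu (S m) = mu (G m) by rewrite GE lebesgue_shift.
  by apply: le_measure; rewrite ?inE //; [exact: measurableI (mG m) mD | exact: mG].
have step_c : (\sum_(m < N) mu (G m `&` D) =
    \int[mu]_(x in D) (\sum_(m < N) (\1_(G m) x)%:E))%E.
  rewrite ge0_integral_sum //.
  - by apply: eq_bigr => m _; rewrite integral_indic //; exact: mG.
  - move=> m; apply/measurable_realfun.measurable_EFinP.
    by apply: measurable_realfun.measurable_indic; exact: mG.
have step_d : (\int[mu]_(x in D) (k%:R)%:E <=
    \int[mu]_(x in D) (\sum_(m < N) (\1_(G m) x)%:E))%E.
  apply: ge0_le_integral => //.
    apply: emeasurable_sum => m; apply/measurable_realfun.measurable_EFinP.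
    by apply: measurable_realfun.measurable_indic; exact: mG.
  move=> x [/= Dx1 Dx2].
  move: Dx1; rewrite in_itv /= => /andP[x0 xh].
  have xpi : x != pi / N%:R by apply/eqP => ex; apply: Dx2.
  rewrite sumEFin lee_fin.
  have Gx (m : 'I_N) : \1_(G m) x =
      ((0 < F (x + m%:R * h))%R : nat)%:R :> R.
    rewrite indicE; congr ((nat_of_bool _)%:R); apply/idP/idP.
      by rewrite inE => -[_]; rewrite /= => ->.
    move=> hm; rewrite inE; split => //=; rewrite in_itv /=.
    by apply/andP; split; [exact: ltW|].
  under eq_bigr do rewrite Gx.
  rewrite -natr_sum ler_nat.
  have W : (A * cos (p%:R * x) + B * cos (q%:R * x) != 0) ||
      (A * sin (p%:R * x) - B * sin (q%:R * x) != 0).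
    have NRE : N%:R = p%:R + q%:R :> R by rewrite natrD.
    have sN : sin (N%:R * x) != 0.
      set y := N%:R * x.
      have ypos : 0 < y by rewrite /y mulr_gt0.
      have y2 : y < 2 * pi.
        by move: xh; rewrite /y /h ltr_pdivlMr // (mulrC x).
      have ypi : y != pi.
        apply/eqP => e; apply: (negP xpi); apply/eqP; rewrite -e /y.
        by move: (N%:R) NR0 => M M0; field; rewrite gt_eqF.
      case: (ltgtP y pi) => [ylt|ygt|e]; last by rewrite e eqxx in ypi.
        by rewrite gt_eqF // sin_gt0_pi // ypos ylt.
      have -> : sin y = - sin (y - pi) by rewrite -[in LHS](subrK pi y) sinDpi.
      rewrite oppr_eq0 gt_eqF // sin_gt0_pi //; apply/andP; split; lra.
    rewrite -negb_and; apply/negP => /andP[/eqP W1 /eqP W2].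
    have eA : A * sin (N%:R * x) = cos (q%:R * x) * (A * sin (p%:R * x) - B * sin (q%:R * x))
        + sin (q%:R * x) * (A * cos (p%:R * x) + B * cos (q%:R * x)).
      by rewrite NRE mulrDl sinD; ring.
    have eB : B * sin (N%:R * x) = - cos (p%:R * x) * (A * sin (p%:R * x) - B * sin (q%:R * x))
        + sin (p%:R * x) * (A * cos (p%:R * x) + B * cos (q%:R * x)).
      by rewrite NRE mulrDl sinD; ring.
    rewrite W1 W2 !mulr0 addr0 in eA eB.
    move/eqP: eA; rewrite mulf_eq0 (negbTE sN) orbF => /eqP A0.
    move/eqP: eB; rewrite mulf_eq0 (negbTE sN) orbF => /eqP B0.
    by move: AB; rewrite A0 B0 eqxx.
  apply: (leq_trans (count_F A B p q k x hN cpq W)).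
  rewrite -sum1_card big_mkcond /=; apply: leq_sum => m _.
  by rewrite finset.inE; case: (0 < _)%R.
have step_e : (h%:E <= mu D)%E.
  have : (mu `]0%R, h[%classic <= mu D + mu [set (pi / N%:R)%R])%E.
    apply: le_trans (measureU2 mu mD (measurable_set1 (pi / N%:R))).
    apply: le_measure; rewrite ?inE //.
      by apply: measurableU => //; exact: measurable_set1.
    move=> y hy; case: (eqVneq y (pi / N%:R)) => [->|ne]; first by right.
    by left; split => //= /eqP; rewrite (negbTE ne).
  rewrite lebesgue_measure_set1 adde0 lebesgue_measure_itv /= lte_fin h0.
  by rewrite oppr0 adde0.
have : ((k%:R * h)%:E <= mu ([set x : R | (0 <= x <= 2 * pi)%R] `&` [set x | (0 < F x)%R]))%E.
  apply: le_trans step_a; apply: le_trans step_b; rewrite step_c.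
  apply: le_trans step_d; rewrite integral_cst // EFinM.
  by apply: lee_wpmul2l => //; rewrite lee_fin.
move=> H; rewrite /rho_plus.
apply: le_trans (lee_wpmul2r _ H); last by rewrite lee_fin invr_ge0 mulr_ge0 // ltW.
rewrite -EFinM lee_fin le_eqVlt; apply/orP; left; apply/eqP.
have NRk : N%:R = 2 * k%:R + 1 :> R by rewrite hN -addn1 natrD -muln2 natrM mulrC.
rewrite /h NRk; move: (@pi R) pi0 => Q Q0; field.
have k1 : 0 < 2 * k%:R + 1 :> R by rewrite -NRk.
by rewrite !gt_eqF.
Qed.

End Main.

Theorem theorem4 (R : realType) (A B : R) (p q : nat) :
  let F := fun x : R => A * cos (p%:R * x) + B * cos (q%:R * x) in
  (0 < p)%N -> (0 < q)%N -> coprime p q -> odd (p + q) ->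
  F <> (fun _ => 0) ->
  (Order.min (rho_plus F (2 * pi)) (rho_minus F (2 * pi))
     >= (1 / 2 - 1 / (2 * (p + q)%:R))%:E)%E.
Proof.
move=> F p0 q0 cpq oN F0.
have [y hy] : exists y, F y != 0.
  apply: contra_notP F0 => H; apply/funext => y; apply/eqP.
  by apply/negPn/negP => hy; apply: H; exists y.
rewrite le_min; apply/andP; split.
  by apply: (main_plus R A B p q p0 q0 cpq oN); exists y.
have -> : rho_minus F (2 * pi) = rho_plus (Fpq (- A) (- B) p q) (2 * pi).
  rewrite /rho_minus /rho_plus; congr (lebesgue_measure (_ `&` _) * _)%E.
  by apply/seteqP; split => z /=; rewrite /Fpq /F !mulNr -opprD oppr_gt0.
apply: (main_plus R (- A) (- B) p q p0 q0 cpq oN); exists y.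
by rewrite /Fpq !mulNr -opprD oppr_eq0.
Qed.
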